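(* Let $\rho$ be a monic PBPO rule in a category. Then ${\Rightarrow_\rho} = {\Rightarrow^{\rightarrowtail}_\rho}$ and ${\Rightarrow^{\mathrm{SM}}_\rho} = {\Rightarrow^{\mathrm{PBPO}^{+}}_\rho}$, where in the latter $\rho$ is regarded as a PBPO$^{+}$ rule by forgetting $t_R$, $r'$ and $R'$.
   Context: A PBPO rule consists of morphisms $l : K \to L$, $r : K \to R$, $t_L : L \to L'$, $t_K : K \to K'$, $t_R : R \to R'$, $l' : K' \to L'$, $r' : K' \to R'$ with $t_L \circ l = l' \circ t_K$ and $t_R \circ r = r' \circ t_K$; it is canonical if $(l,t_K)$ is a pullback of $(t_L,l')$ and $(r',t_R)$ a pushout of $(t_K,r)$, and monic if canonical with $t_L$ mono. A PBPO step $G_L \Rightarrow_\rho^{m,\alpha} G_R$: $m : L \to G_L$, $\alpha : G_L \to L'$ with $t_L = \alpha \circ m$; a pullback $G_L \xleftarrow{g_L} G_K \xrightarrow{u'} K'$ of $\alpha,l'$; the unique $u : K \to G_K$ with $g_L \circ u = m \circ l$ and $u' \circ u = t_K$; a pushout $G_K \xrightarrow{g_R} G_R \xleftarrow{w} R$ of $u,r$. ${\Rightarrow_\rho}$ relates $G_L,G_R$ if such a step exists for some $m,\alpha$; ${\Rightarrow^{\rightarrowtail}_\rho}$ requires $m$ monic; ${\Rightarrow^{\mathrm{SM}}_\rho}$ requires that $L \xleftarrow{1_L} L \xrightarrow{m} G_L$ is a pullback of $t_L$ and $\alpha$. A PBPO$^{+}$ rule consists of $l : K \to L$, $r : K \to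 R$, monos $t_L, t_K$ and $l' : K' \to L'$ with $(l,t_K)$ a pullback of $(t_L,l')$. A PBPO$^{+}$ step $G_L \Rightarrow^{\mathrm{PBPO}^{+}}_\rho G_R$ holds if there is $\alpha : G_L \to L'$ and $m : L \to G_L$ such that $L \xleftarrow{1_L} L \xrightarrow{m} G_L$ is a pullback of $t_L,\alpha$; a pullback $G_L \xleftarrow{g_L} G_K \xrightarrow{u'} K'$ of $\alpha,l'$; the unique $u : K \to G_K$ with $t_K = u' \circ u$; and a pushout $G_K \xrightarrow{g_R} G_R \xleftarrow{w} R$ of $u$ and $r$. *)

(* Defs.v *)
Set Implicit Arguments.
Unset Strict Implicit.

Record Category := {
  Obj :> Type;
  Hom : Obj -> Obj -> Type;
  idm : forall A : Obj, Hom A A;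
  comp : forall A B C : Obj, Hom B C -> Hom A B -> Hom A C;
  comp_assoc : forall A B C D (h : Hom C D) (g : Hom B C) (f : Hom A B),
      comp h (comp g f) = comp (comp h g) f;
  comp_id_l : forall A B (f : Hom A B), comp (idm B) f = f;
  comp_id_r : forall A B (f : Hom A B), comp f (idm A) = f
}.

Arguments Hom {c} _ _.
Arguments idm {c} _.
Arguments comp {c A B C} _ _.

Notation "g \o f" := (comp g f) (at level 40, left associativity).

Unset Implicit Arguments.
Section CatDefs.
Variable C : Category.

Definition mono {X Y : C} (f : Hom X Y) : Prop :=
  forall (Z : C) (g h : Hom Z X), f \o g = f \o h -> g = h.

Definition is_pullback {A B D P : C} (f : Hom A D) (g : Hom B D)
    (p1 : Hom P A) (p2 : Hom P B) : Prop :=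
  f \o p1 = g \o p2 /\
  forall (Q : C) (q1 : Hom Q A) (q2 : Hom Q B), f \o q1 = g \o q2 ->
    exists u : Hom Q P, (p1 \o u = q1 /\ p2 \o u = q2) /\
      forall v : Hom Q P, p1 \o v = q1 -> p2 \o v = q2 -> v = u.

Definition is_pushout {A B D P : C} (f : Hom A B) (g : Hom A D)
    (i1 : Hom B P) (i2 : Hom D P) : Prop :=
  i1 \o f = i2 \o g /\
  forall (Q : C) (q1 : Hom B Q) (q2 : Hom D Q), q1 \o f = q2 \o g ->
    exists u : Hom P Q, (u \o i1 = q1 /\ u \o i2 = q2) /\
      forall v : Hom P Q, v \o i1 = q1 -> v \o i2 = q2 -> v = u.

Record PBPO_rule := {
  rL : C; rK : C; rR : C; rL' : C; rK' : C; rR' : C;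
  r_l : Hom rK rL;
  r_r : Hom rK rR;
  r_tL : Hom rL rL';
  r_tK : Hom rK rK';
  r_tR : Hom rR rR';
  r_l' : Hom rK' rL';
  r_r' : Hom rK' rR';
  r_commL : r_tL \o r_l = r_l' \o r_tK;
  r_commR : r_tR \o r_r = r_r' \o r_tK
}.

Arguments r_l _ : clear implicits.
Arguments r_r _ : clear implicits.
Arguments r_tL _ : clear implicits.
Arguments r_tK _ : clear implicits.
Arguments r_tR _ : clear implicits.
Arguments r_l' _ : clear implicits.
Arguments r_r' _ : clear implicits.

Definition canonical_rule (rho : PBPO_rule) : Prop :=
  is_pullback (r_tL rho) (r_l' rho) (r_l rho) (r_tK rho) /\
  is_pushout (r_tK rho) (r_r rho) (r_r' rho) (r_tR rho).

Definition monic_rule (rho : PBPO_rule) : Prop :=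
  canonical_rule rho /\ mono (r_tL rho).

Definition PBPO_step_with (rho : PBPO_rule) (GL GR : C)
    (m : Hom (rL rho) GL) (alpha : Hom GL (rL' rho)) : Prop :=
  r_tL rho = alpha \o m /\
  exists (GK : C) (gL : Hom GK GL) (u' : Hom GK (rK' rho)),
    is_pullback alpha (r_l' rho) gL u' /\
    exists u : Hom (rK rho) GK,
      gL \o u = m \o r_l rho /\ u' \o u = r_tK rho /\
      exists (gR : Hom GK GR) (w : Hom (rR rho) GR),
        is_pushout u (r_r rho) gR w.

Definition PBPO_step (rho : PBPO_rule) (GL GR : C) : Prop :=
  exists m alpha, PBPO_step_with rho GL GR m alpha.

Definition PBPO_step_mono (rho : PBPO_rule) (GL GR : C) : Prop :=
  exists m alpha, mono m /\ PBPO_step_with rho GL GR m alpha.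

Definition PBPO_step_SM (rho : PBPO_rule) (GL GR : C) : Prop :=
  exists m alpha, is_pullback (r_tL rho) alpha (idm (rL rho)) m /\
    PBPO_step_with rho GL GR m alpha.

Definition PBPOplus_step {L K R L' K' : C}
    (l : Hom K L) (r : Hom K R) (tL : Hom L L') (tK : Hom K K')
    (l' : Hom K' L') (GL GR : C) : Prop :=
  exists (alpha : Hom GL L') (m : Hom L GL),
    is_pullback tL alpha (idm L) m /\
    exists (GK : C) (gL : Hom GK GL) (u' : Hom GK K'),
      is_pullback alpha l' gL u' /\
      exists u : Hom K GK,
        tK = u' \o u /\
        exists (gR : Hom GK GR) (w : Hom R GR),
          is_pushout u r gR w.

Definition PBPOplus_step_of (rho : PBPO_rule) (GL GR : C) : Prop :=
  PBPOplus_step (r_l rho) (r_r rho) (r_tL rho) (r_tK rho) (r_l' rho) GL GR.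

End CatDefs.

Arguments mono {C X Y} _.
Arguments monic_rule {C} _.
Arguments PBPO_step {C} _ _ _.
Arguments PBPO_step_mono {C} _ _ _.
Arguments PBPO_step_SM {C} _ _ _.
Arguments PBPOplus_step_of {C} _ _ _.

(* Main.v *)
Require Import Defs.

Theorem proposition1 (C : Category) (rho : PBPO_rule C) :
  monic_rule rho ->
  (forall GL GR : C, PBPO_step rho GL GR <-> PBPO_step_mono rho GL GR) /\
  (forall GL GR : C, PBPO_step_SM rho GL GR <-> PBPOplus_step_of rho GL GR).
Proof.
  intros [_ HtL]. split; intros GL GR; split.
  - intros [m [alpha H]]. exists m, alpha. split; [|exact H].
    destruct H as [Ht _]. intros Z g h E.
    apply HtL. rewrite Ht, <- !comp_assoc, E. reflexivity.
  - intros [m [alpha [_ H]]]. exists m, alpha. exact H.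
  - intros [m [alpha [Hpb [Ht [GK [gL [u' [Hpb2 [u [E1 [E2 Hpo]]]]]]]]]]].
    unfold PBPOplus_step_of, PBPOplus_step.
    exists alpha, m. split; [exact Hpb|].
    exists GK, gL, u'. split; [exact Hpb2|].
    exists u. split; [symmetry; exact E2| exact Hpo].
  - unfold PBPOplus_step_of, PBPOplus_step.
    intros [alpha [m [Hpb [GK [gL [u' [Hpb2 [u [E2 Hpo]]]]]]]]].
    exists m, alpha. split; [exact Hpb|].
    assert (Ht : r_tL C rho = alpha \o m).
    { destruct Hpb as [e _]. rewrite comp_id_r in e. exact e. }
    split; [exact Ht|].
    exists GK, gL, u'. split; [exact Hpb2|].
    exists u. split; [| split; [symmetry; exact E2| exact Hpo]].
    destruct Hpb as [_ U].
    assert (Ec : r_tL C rho \o r_l C rho = alpha \o (gL \o u)).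
    { rewrite comp_assoc. destruct Hpb2 as [e _]. rewrite e, <- comp_assoc, <- E2.
      apply (r_commL C rho). }
    destruct (U _ _ _ Ec) as [v [[Ev1 Ev2] _]].
    rewrite comp_id_l in Ev1. subst v. symmetry. exact Ev2.
Qed.
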